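(* Let $n\geq1$. For all $m\in\mathbb N$, $\overline{(m,m)}\in\mathrm{span}_{\mathbb C}\{\overline{(1,1)},\overline{(2,2)},\ldots,\overline{(n,n)}\}$.
   Context: $\Lambda_{2,n}=\{\alpha\in\mathbb N^2:1\leq\alpha_1+\alpha_2\leq n\}$, $\lambda_{2,n}=|\Lambda_{2,n}|$, and for $v\in\mathbb N^2$, $\bar v=\big(\binom{v_1}{\alpha_1}\binom{v_2}{\alpha_2}\big)_{\alpha\in\Lambda_{2,n}}\in\mathbb C^{\lambda_{2,n}}$. *)

(* Defs.v *)
From HB Require Import structures.
From mathcomp Require Import all_boot all_order all_algebra.
From mathcomp Require Import reals.
From mathcomp Require Export complex.
Set Implicit Arguments. Unset Strict Implicit. Unset Printing Implicit Defensive.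
Import GRing.Theory.
Local Open Scope ring_scope.

Definition inLambda (n : nat) (a : nat * nat) : bool := (1 <= a.1 + a.2 <= n)%N.

(* the alpha-coordinate of bar v : binom(v1,alpha1) * binom(v2,alpha2), in a ring C *)
Definition vbar (C : nzRingType) (v a : nat * nat) : C :=
  ('C(v.1, a.1) * 'C(v.2, a.2))%:R.

(* Main.v *)
Require Import Defs.
From HB Require Import structures.
From mathcomp Require Import all_boot all_order all_algebra.
From mathcomp Require Import reals complex.
From mathcomp Require Import ring zify.
Local Open Scope ring_scope.
Local Open Scope complex_scope.
Import GRing.Theory.

Lemma binM m a i : ('C(m,a) * 'C(m-a,i) = 'C(m,a+i) * 'C(a+i,a))%N.
Proof.
case: (leqP (a+i) m) => h; last first.
  rewrite (bin_small h) mul0n. case: (leqP a m)=> ha; last by rewrite bin_small.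
  rewrite (@bin_small (m-a) i) ?muln0 //; lia.
apply/eqP; rewrite -(@eqn_pmul2r (a`! * i`! * (m-(a+i))`!)); last by rewrite !muln_gt0 !fact_gt0.
have e1 : ('C(m,a) * (a`! * (m-a)`!) = m`!)%N by apply: bin_fact; lia.
have e2 : ('C(m-a,i) * (i`! * (m-(a+i))`!) = (m-a)`!)%N.
  have -> : (m-(a+i) = m-a-i)%N by lia.
  apply: bin_fact; lia.
have e3 : ('C(m,a+i) * ((a+i)`! * (m-(a+i))`!) = m`!)%N by apply: bin_fact.
have e4 : ('C(a+i,a) * (a`! * i`!) = (a+i)`!)%N.
  by have := @bin_fact (a+i) a (leq_addr i a); rewrite addKn.
have -> : ('C(m, a) * 'C(m - a, i) * (a`! * i`! * (m - (a + i))`!) =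
   'C(m, a) * (a`! * ('C(m - a, i) * (i`! * (m - (a + i))`!))))%N by ring.
rewrite e2 e1.
have -> : ('C(m, a+i) * 'C(a+i,a) * (a`! * i`! * (m - (a + i))`!) =
   'C(m, a+i) * (('C(a+i,a) * (a`! * i`!)) * (m - (a + i))`!))%N by ring.
by rewrite e4 e3.
Qed.

Lemma binexp m a b : ('C(m,a) * 'C(m,b) =
   \sum_(i < b.+1) 'C(m,a+i) * ('C(a+i,a) * 'C(a,b-i)))%N.
Proof.
case: (leqP a m) => ha; last first.
  rewrite bin_small // mul0n big1 // => i _; rewrite bin_small ?mul0n //; lia.
have V := binomial.Vandermonde (m-a) a b; rewrite subnK in V => //.
rewrite -V big_distrr /=; apply: eq_bigr => i _.
by rewrite mulnA binM mulnA.
Qed.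

Lemma vbarE (C : nzRingType) v a : vbar C v a = (('C(v.1,a.1) * 'C(v.2,a.2))%N)%:R.
Proof. by []. Qed.

Theorem lemma2p11 (R : realType) (n : nat) (hn : (1 <= n)%N) (m : nat) :
  exists c : 'I_n -> R[i],
    forall a : nat * nat, inLambda n a ->
      vbar (R[i]) (m, m) a = \sum_(k < n) c k * vbar (R[i]) (k.+1, k.+1) a.
Proof.
pose M : 'M[R[i]]_n := \matrix_(k, j) ('C(k.+1, j.+1))%:R.
pose u : 'rV[R[i]]_n := \row_j ('C(m, j.+1))%:R.
have Mu : M \in unitmx.
  rewrite unitmxE det_trig; last first.
    by apply/is_trig_mxP => i j lij; rewrite mxE bin_small.
  rewrite big1 ?unitr1 // => i _; by rewrite mxE binn.
exists (fun k => (u *m invmx M) 0 k).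
have key : forall j, (1 <= j <= n)%N ->
    \sum_(k < n) (u *m invmx M) 0 k * ('C(k.+1, j))%:R = ('C(m, j))%:R :> R[i].
  move=> [|j] /andP[j1 jn] //.
  have := congr1 (fun A : 'rV_n => A 0 (Ordinal jn)) (mulmxKV Mu u).
  rewrite !mxE /= => <-; apply: eq_bigr => k _; rewrite mxE /=.
  by rewrite /M mxE.
case=> [a b] /andP[ab1 abn]; rewrite /= in ab1 abn.
rewrite !vbarE /= binexp natr_sum.
under [RHS]eq_bigr => k _.
  rewrite (vbarE R[i] (k.+1,k.+1) (a,b)) /= binexp natr_sum mulr_sumr.
  over.
rewrite exchange_big /=; apply: eq_bigr => i _.
under eq_bigr do rewrite natrM mulrA.
rewrite -mulr_suml natrM.
case: (posnP (a + i)) => [a0|apos].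
  have -> : ('C(a, b - i) = 0)%N by rewrite bin_small //; lia.
  by rewrite muln0 !mulr0.
rewrite key //; apply/andP; split => //; have := ltn_ord i; lia.
Qed.
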